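(* Let $\mathfrak g_1,\mathfrak g_2$ be vector spaces and $\mathcal G=\mathfrak g_1\oplus\mathfrak g_2$. There is a one-to-one correspondence between matched pairs of Lie triple systems $(\mathfrak g_1,\mathfrak g_2;\rho_1,\rho_2)$ and strict twilled Lie triple system structures on $\mathcal G$ (with respect to $\mathfrak g_1,\mathfrak g_2$). It sends a matched pair to $\mathcal G$ with the bracket $$[x+u,y+v,z+w]_{\bowtie}=[x,y,z]_{\mathfrak g_1}+D_2(u,v)z+\rho_2(v,w)x-\rho_2(u,w)y+[u,v,w]_{\mathfrak g_2}+D_1(x,y)w+\rho_1(y,z)u-\rho_1(x,z)v,$$ and conversely sends a strict twilled Lie triple system $(\mathcal G,[\cdot,\cdot,\cdot]_{\mathcal G})$ to the restricted brackets on $\mathfrak g_1,\mathfrak g_2$ together with $\rho_1(x,y)u=[u,x,y]_2$ and $\rho_2(u,v)x=[x,u,v]_1$ ($x,y,z\in\mathfrak g_1$, $u,v,w\in\mathfrak g_2$).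
   Context: All vector spaces are over a field of characteristic $0$. A Lie triple system is a vector space with a trilinear bracket $[\cdot,\cdot,\cdot]$ satisfying $[x,x,y]=0$, $[x,y,z]+[y,z,x]+[z,x,y]=0$ and $[x,y,[z,w,t]]=[[x,y,z],w,t]+[z,[x,y,w],t]+[z,w,[x,y,t]]$. A representation of a Lie triple system $\mathfrak g$ on $V$ is a bilinear $\rho:\otimes^2\mathfrak g\to\mathfrak{gl}(V)$ with $D(x,y):=\rho(y,x)-\rho(x,y)$ such that $\rho(z,w)\rho(x,y)-\rho(y,w)\rho(x,z)-\rho(x,[y,z,w])+D(y,z)\rho(x,w)=0$ and $\rho([x,y,z],w)+\rho(z,[x,y,w])=[D(x,y),\rho(z,w)]$. A matched pair $(\mathfrak g_1,\mathfrak g_2;\rho_1,\rho_2)$ consists of Lie triple systems $(\mathfrak g_1,[\cdot,\cdot,\cdot]_{\mathfrak g_1})$, $(\mathfrak g_2,[\cdot,\cdot,\cdot]_{\mathfrak g_2})$, a representation $\rho_1$ of $\mathfrak g_1$ on $\mathfrak g_2$ and a representation $\rho_2$ of $\mathfrak g_2$ on $\mathfrak g_1$, with $D_1(x,y)=\rho_1(y,x)-\rho_1(x,y)$, $D_2(u,v)=\rho_2(v,u)-\rho_2(u,v)$, such that for all $x,y,z\in\mathfrak g_1$, $u,v,w\in\mathfrak g_2$: $\rho_2(u,v)[x,y,z]_{\mathfrak g_1}=[x,y,\rho_2(u,v)z]_{\mathfrak g_1}-\rho_2(D_1(x,y)u,v)z-\rho_2(u,D_1(x,y)v)z$; $[x,y,\rho_2(u,v)z]_{\mathfrak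 g_1}=\rho_2(u,D_1(x,y)v)z+\rho_2(\rho_1(z,y)u,v)x-\rho_2(\rho_1(z,x)u,v)y$; $[\rho_2(u,v)x,y,z]_{\mathfrak g_1}=\rho_2(u,\rho_1(y,z)v)x+D_2(v,\rho_1(x,y)u)z-\rho_2(v,\rho_1(x,z)u)y$; $\rho_1(x,y)[u,v,w]_{\mathfrak g_2}=[u,v,\rho_1(x,y)w]_{\mathfrak g_2}-\rho_1(D_2(u,v)x,y)w-\rho_1(x,D_2(u,v)y)w$; $[u,v,\rho_1(x,y)w]_{\mathfrak g_2}=\rho_1(x,D_2(u,v)y)w+\rho_1(\rho_2(w,v)x,y)u-\rho_1(\rho_2(w,u)x,y)v$; $[\rho_1(x,y)u,v,w]_{\mathfrak g_2}=\rho_1(x,\rho_2(v,w)y)u+D_1(y,\rho_2(u,v)x)w-\rho_1(y,\rho_2(u,w)x)v$. A strict twilled Lie triple system structure on $\mathcal G=\mathfrak g_1\oplus\mathfrak g_2$ is a Lie triple system bracket $[\cdot,\cdot,\cdot]_{\mathcal G}$ on $\mathcal G$ for which $\mathfrak g_1$ and $\mathfrak g_2$ are subalgebras and, writing $[a,b,c]_i$ for the $\mathfrak g_i$-component, $[x,y,w]_1=[u,y,z]_1=[x,v,z]_1=0$ and $[u,v,z]_2=[x,v,w]_2=[u,y,w]_2=0$ for all $x,y,z\in\mathfrak g_1,u,v,w\in\mathfrak g_2$ (i.e. the bracket maps tensors with exactly one $\mathfrak g_2$-factor into $\mathfrak g_2$ and with exactly two $\mathfrak g_2$-factors into $\mathfrak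 g_1$; equivalently the component $\hat\psi$ of bidegree $1|1$ vanishes). *)

(* Defs.v *)
From HB Require Import structures.
From mathcomp Require Import all_boot all_order all_algebra.
Set Implicit Arguments. Unset Strict Implicit. Unset Printing Implicit Defensive.
Import GRing.Theory.
Local Open Scope ring_scope.

Section LTS.
Variable K : fieldType.

Definition trilinear (V : lmodType K) (br : V -> V -> V -> V) : Prop :=
  (forall (a : K) x x' y z, br (a *: x + x') y z = a *: br x y z + br x' y z) /\
  (forall (a : K) x y y' z, br x (a *: y + y') z = a *: br x y z + br x y' z) /\
  (forall (a : K) x y z z', br x y (a *: z + z') = a *: br x y z + br x y z').

Definition lts (V : lmodType K) (br : V -> V -> V -> V) : Prop :=
  trilinear br /\
  (forall x y, br x x y = 0) /\
  (forall x y z, br x y z + br y z x + br z x y = 0) /\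
  (forall x y z w t,
     br x y (br z w t) = br (br x y z) w t + br z (br x y w) t + br z w (br x y t)).

Definition Dof (G V : lmodType K) (rho : G -> G -> V -> V) (x y : G) (v : V) : V :=
  rho y x v - rho x y v.

Definition lts_rep (G V : lmodType K) (br : G -> G -> G -> G)
    (rho : G -> G -> V -> V) : Prop :=
  (forall (a : K) x x' y v, rho (a *: x + x') y v = a *: rho x y v + rho x' y v) /\
  (forall (a : K) x y y' v, rho x (a *: y + y') v = a *: rho x y v + rho x y' v) /\
  (forall (a : K) x y v v', rho x y (a *: v + v') = a *: rho x y v + rho x y v') /\
  (forall x y z w v,
     rho z w (rho x y v) - rho y w (rho x z v) - rho x (br y z w) v
     + Dof rho y z (rho x w v) = 0) /\
  (forall x y z w v,
     rho (br x y z) w v + rho z (br x y w) v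
     = Dof rho x y (rho z w v) - rho z w (Dof rho x y v)).

Variables V1 V2 : lmodType K.

Definition matched_pair (br1 : V1 -> V1 -> V1 -> V1) (br2 : V2 -> V2 -> V2 -> V2)
    (rho1 : V1 -> V1 -> V2 -> V2) (rho2 : V2 -> V2 -> V1 -> V1) : Prop :=
  lts br1 /\ lts br2 /\ lts_rep br1 rho1 /\ lts_rep br2 rho2 /\
  (forall x y z u v,
     rho2 u v (br1 x y z)
     = br1 x y (rho2 u v z) - rho2 (Dof rho1 x y u) v z - rho2 u (Dof rho1 x y v) z) /\
  (forall x y z u v,
     br1 x y (rho2 u v z)
     = rho2 u (Dof rho1 x y v) z + rho2 (rho1 z y u) v x - rho2 (rho1 z x u) v y) /\
  (forall x y z u v,
     br1 (rho2 u v x) y z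
     = rho2 u (rho1 y z v) x + Dof rho2 v (rho1 x y u) z - rho2 v (rho1 x z u) y) /\
  (forall x y u v w,
     rho1 x y (br2 u v w)
     = br2 u v (rho1 x y w) - rho1 (Dof rho2 u v x) y w - rho1 x (Dof rho2 u v y) w) /\
  (forall x y u v w,
     br2 u v (rho1 x y w)
     = rho1 x (Dof rho2 u v y) w + rho1 (rho2 w v x) y u - rho1 (rho2 w u x) y v) /\
  (forall x y u v w,
     br2 (rho1 x y u) v w
     = rho1 x (rho2 v w y) u + Dof rho1 y (rho2 u v x) w - rho1 y (rho2 u w x) v).

Definition Gsp := (V1 * V2)%type.

Definition strict_twilled (brG : Gsp -> Gsp -> Gsp -> Gsp) : Prop :=
  lts brG /\
  (forall x y z : V1, (brG (x, 0) (y, 0) (z, 0)).2 = 0) /\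
  (forall u v w : V2, (brG (0, u) (0, v) (0, w)).1 = 0) /\
  (forall (x y : V1) (w : V2), (brG (x, 0) (y, 0) (0, w)).1 = 0) /\
  (forall (u : V2) (y z : V1), (brG (0, u) (y, 0) (z, 0)).1 = 0) /\
  (forall (x z : V1) (v : V2), (brG (x, 0) (0, v) (z, 0)).1 = 0) /\
  (forall (u v : V2) (z : V1), (brG (0, u) (0, v) (z, 0)).2 = 0) /\
  (forall (x : V1) (v w : V2), (brG (x, 0) (0, v) (0, w)).2 = 0) /\
  (forall (u w : V2) (y : V1), (brG (0, u) (y, 0) (0, w)).2 = 0).

Definition bowtie (br1 : V1 -> V1 -> V1 -> V1) (br2 : V2 -> V2 -> V2 -> V2)
    (rho1 : V1 -> V1 -> V2 -> V2) (rho2 : V2 -> V2 -> V1 -> V1)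
    (a b c : Gsp) : Gsp :=
  let: (x, u) := a in let: (y, v) := b in let: (z, w) := c in
  (br1 x y z + Dof rho2 u v z + rho2 v w x - rho2 u w y,
   br2 u v w + Dof rho1 x y w + rho1 y z u - rho1 x z v).

Definition res1 (brG : Gsp -> Gsp -> Gsp -> Gsp) (x y z : V1) : V1 :=
  (brG (x, 0) (y, 0) (z, 0)).1.
Definition res2 (brG : Gsp -> Gsp -> Gsp -> Gsp) (u v w : V2) : V2 :=
  (brG (0, u) (0, v) (0, w)).2.
Definition rho1_of (brG : Gsp -> Gsp -> Gsp -> Gsp) (x y : V1) (u : V2) : V2 :=
  (brG (0, u) (x, 0) (y, 0)).2.
Definition rho2_of (brG : Gsp -> Gsp -> Gsp -> Gsp) (u v : V2) (x : V1) : V1 :=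
  (brG (x, 0) (0, u) (0, v)).1.

End LTS.

(* Main.v *)
Require Import Defs.
From Stdlib Require Import FunctionalExtensionality.
From HB Require Import structures.
From mathcomp Require Import all_boot all_order all_algebra ring.
Set Implicit Arguments. Unset Strict Implicit. Unset Printing Implicit Defensive.
Import GRing.Theory.
Local Open Scope ring_scope.

Section TE.
Variable V : zmodType.
Definition te := (int * V)%type.
HB.instance Definition _ := GRing.Zmodule.on te.
Definition te_one : te := (1, 0).
Definition te_mul (p q : te) : te := (p.1 * q.1, p.2 *~ q.1 + q.2 *~ p.1).
Lemma te_mulA : associative te_mul.
Proof. move=> [a x] [b y] [c z]; rewrite /te_mul /=; congr (_, _); first by rewrite mulrA.
by rewrite !mulrzDl -!mulrzA -!addrA (mulrC c a) (mulrC b a).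
Qed.
Lemma te_mulC : commutative te_mul.
Proof. by move=> [a x] [b y]; rewrite /te_mul /= mulrC addrC. Qed.
Lemma te_mul1 : left_id te_one te_mul.
Proof. by move=> [a x]; rewrite /te_mul /= mul1r mul0rz add0r mulr1z. Qed.
Lemma te_mulDl : left_distributive te_mul +%R.
Proof. move=> [a x] [b y] [c z]; rewrite /te_mul /=; congr (_, _); first by rewrite mulrDl.
by rewrite mulrzDl mulrzDr_tmp !addrA; congr (_ + _); rewrite -!addrA; congr (_ + _); rewrite addrC.
Qed.
Lemma te_one_neq0 : te_one != 0.
Proof. by rewrite /te_one; apply/eqP => -[]. Qed.
HB.instance Definition _ := GRing.Zmodule_isComNzRing.Build te te_mulA te_mulC te_mul1 te_mulDl te_one_neq0.
Definition emb (x : V) : te := (0, x).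
Lemma emb_inj : injective emb. Proof. by move=> x y []. Qed.
Lemma embD x y : emb (x + y) = emb x + emb y. Proof. by rewrite /emb; congr (_,_); rewrite addr0. Qed.
Lemma embN x : emb (- x) = - emb x. Proof. by rewrite /emb; congr (_,_); rewrite oppr0. Qed.
Lemma emb0 : emb 0 = 0. Proof. by []. Qed.
Lemma lcP (X a b : V) : a = b -> X - (a - b) = 0 -> X = 0.
Proof. by move=> ->; rewrite subrr subr0. Qed.
Lemma lcN (X a b : V) : a = b -> X + (a - b) = 0 -> X = 0.
Proof. by move=> ->; rewrite subrr addr0. Qed.
Lemma goal0 (a b : V) : a - b = 0 -> a = b.
Proof. by move/eqP; rewrite subr_eq0 => /eqP. Qed.
End TE.

Ltac modring := apply: emb_inj; rewrite ?(embD, embN, emb0); ring.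

Section Lin.
Variable K : fieldType.
Definition lin3 (A B C W : lmodType K) (f : A -> B -> C -> W) :=
 (forall (a : K) x x' y z, f (a *: x + x') y z = a *: f x y z + f x' y z) /\
 (forall (a : K) x y y' z, f x (a *: y + y') z = a *: f x y z + f x y' z) /\
 (forall (a : K) x y z z', f x y (a *: z + z') = a *: f x y z + f x y z').

Lemma lin1_0 (A W : lmodType K) (g : A -> W) :
  (forall a x x', g (a *: x + x') = a *: g x + g x') -> g 0 = 0.
Proof. move=> H; have := H 1 0 0; rewrite !scale1r addr0.
by move=> /(congr1 (fun t => t - g 0)); rewrite subrr addrK => E; rewrite -E. Qed.
Lemma lin1_D (A W : lmodType K) (g : A -> W) :
  (forall a x x', g (a *: x + x') = a *: g x + g x') -> forall x y, g (x + y) = g x + g y.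
Proof. by move=> H x y; have := H 1 x y; rewrite !scale1r. Qed.
Lemma lin1_Z (A W : lmodType K) (g : A -> W) :
  (forall a x x', g (a *: x + x') = a *: g x + g x') -> forall a x, g (a *: x) = a *: g x.
Proof. by move=> H a x; rewrite -[a *: x]addr0 H (lin1_0 H) addr0. Qed.
Lemma lin1_N (A W : lmodType K) (g : A -> W) :
  (forall a x x', g (a *: x + x') = a *: g x + g x') -> forall x, g (- x) = - g x.
Proof. by move=> H x; rewrite -scaleN1r (lin1_Z H) scaleN1r. Qed.

Section L3.
Variables (A B C W : lmodType K) (f : A -> B -> C -> W) (L : lin3 f).
Let H1 y z : forall a x x', f (a *: x + x') y z = a *: f x y z + f x' y z.
Proof. by move=> *; apply L. Qed.
Let H2 x z : forall a y y', f x (a *: y + y') z = a *: f x y z + f x y' z.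
Proof. by move=> *; apply L. Qed.
Let H3 x y : forall a z z', f x y (a *: z + z') = a *: f x y z + f x y z'.
Proof. by move=> *; apply L. Qed.
Lemma l3D1 x x' y z : f (x + x') y z = f x y z + f x' y z. Proof. exact: (lin1_D (H1 y z)). Qed.
Lemma l3D2 x y y' z : f x (y + y') z = f x y z + f x y' z. Proof. exact: (lin1_D (H2 x z)). Qed.
Lemma l3D3 x y z z' : f x y (z + z') = f x y z + f x y z'. Proof. exact: (lin1_D (H3 x y)). Qed.
Lemma l3N1 x y z : f (- x) y z = - f x y z. Proof. exact: (lin1_N (H1 y z)). Qed.
Lemma l3N2 x y z : f x (- y) z = - f x y z. Proof. exact: (lin1_N (H2 x z)). Qed.
Lemma l3N3 x y z : f x y (- z) = - f x y z. Proof. exact: (lin1_N (H3 x y)). Qed.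
Lemma l3Z1 a x y z : f (a *: x) y z = a *: f x y z. Proof. exact: (lin1_Z (H1 y z)). Qed.
Lemma l3Z2 a x y z : f x (a *: y) z = a *: f x y z. Proof. exact: (lin1_Z (H2 x z)). Qed.
Lemma l3Z3 a x y z : f x y (a *: z) = a *: f x y z. Proof. exact: (lin1_Z (H3 x y)). Qed.
Lemma l301 y z : f 0 y z = 0. Proof. exact: (lin1_0 (H1 y z)). Qed.
Lemma l302 x z : f x 0 z = 0. Proof. exact: (lin1_0 (H2 x z)). Qed.
Lemma l303 x y : f x y 0 = 0. Proof. exact: (lin1_0 (H3 x y)). Qed.
End L3.
End Lin.

Ltac expand4 L1 L2 L3 L4 :=
  rewrite /Dof ?(l3D1 L1, l3D2 L1, l3D3 L1, l3N1 L1, l3N2 L1, l3N3 L1, l3Z1 L1, l3Z2 L1, l3Z3 L1, l301 L1, l302 L1, l303 L1,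
                l3D1 L2, l3D2 L2, l3D3 L2, l3N1 L2, l3N2 L2, l3N3 L2, l3Z1 L2, l3Z2 L2, l3Z3 L2, l301 L2, l302 L2, l303 L2,
                l3D1 L3, l3D2 L3, l3D3 L3, l3N1 L3, l3N2 L3, l3N3 L3, l3Z1 L3, l3Z2 L3, l3Z3 L3, l301 L3, l302 L3, l303 L3,
                l3D1 L4, l3D2 L4, l3D3 L4, l3N1 L4, l3N2 L4, l3N3 L4, l3Z1 L4, l3Z2 L4, l3Z3 L4, l301 L4, l302 L4, l303 L4,
                scalerDr, scalerN, scaler0, oppr0, addr0, add0r, subr0, sub0r).

Lemma pairE (A B : Type) (p q : A * B) : p.1 = q.1 -> p.2 = q.2 -> p = q.
Proof. by case: p; case: q => /= ? ? ? ? -> ->. Qed.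

Lemma skewP (K : fieldType) (V : lmodType K) (br : V -> V -> V -> V) :
  trilinear br -> (forall x y, br x x y = 0) -> forall x y z, br x y z + br y x z = 0.
Proof.
move=> L S x y z; have L' : lin3 br := L.
have := S (x + y) z; rewrite (l3D1 L') !(l3D2 L') !S add0r addr0 => ->. by [].
Qed.

Ltac fin RD RN RZ := rewrite /bowtie /Dof /=; rewrite ?RZ ?(addr0, add0r, subr0, sub0r, oppr0);
  rewrite ?RD; rewrite ?RN; rewrite ?RZ; modring.

Lemma core1 (K : fieldType) (V1 V2 : lmodType K) (br1 : V1 -> V1 -> V1 -> V1) (br2 : V2 -> V2 -> V2 -> V2)
    (rho1 : V1 -> V1 -> V2 -> V2) (rho2 : V2 -> V2 -> V1 -> V1) :
  matched_pair br1 br2 rho1 rho2 -> lts (bowtie br1 br2 rho1 rho2).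
Proof.
move=> [[L1 [Sk1 [J1 F1]]] [[L2 [Sk2 [J2 F2]]] [[L3a [L3b [L3c [R1a R1b]]]] [[L4a [L4b [L4c [R2a R2b]]]] [C1 [C2 [C3 [C4 [C5 C6]]]]]]]]].
have L3 : lin3 rho1 by split; [|split].
have L4 : lin3 rho2 by split; [|split].
have S1 := skewP L1 Sk1. have S2 := skewP L2 Sk2.
have RD := (l3D1 L1, l3D2 L1, l3D3 L1, l3D1 L2, l3D2 L2, l3D3 L2, l3D1 L3, l3D2 L3, l3D3 L3, l3D1 L4, l3D2 L4, l3D3 L4).
have RN := (l3N1 L1, l3N2 L1, l3N3 L1, l3N1 L2, l3N2 L2, l3N3 L2, l3N1 L3, l3N2 L3, l3N3 L3, l3N1 L4, l3N2 L4, l3N3 L4).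
have RZ := (l301 L1, l302 L1, l303 L1, l301 L2, l302 L2, l303 L2, l301 L3, l302 L3, l303 L3, l301 L4, l302 L4, l303 L4).
have RS := (l3Z1 L1, l3Z2 L1, l3Z3 L1, l3Z1 L2, l3Z2 L2, l3Z3 L2, l3Z1 L3, l3Z2 L3, l3Z3 L3, l3Z1 L4, l3Z2 L4, l3Z3 L4).
split.
  split; [|split].
  - move=> a [x u] [x' u'] [y v] [z w]; apply: pairE; rewrite /bowtie /Dof /=;
    rewrite ?RD; rewrite ?RN; rewrite ?RS; rewrite ?(scalerDr, scalerN); modring.
  - move=> a [x u] [y v] [y' v'] [z w]; apply: pairE; rewrite /bowtie /Dof /=;
    rewrite ?RD; rewrite ?RN; rewrite ?RS; rewrite ?(scalerDr, scalerN); modring.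
  - move=> a [x u] [y v] [z w] [z' w']; apply: pairE; rewrite /bowtie /Dof /=;
    rewrite ?RD; rewrite ?RN; rewrite ?RS; rewrite ?(scalerDr, scalerN); modring.
split.
  move=> [x u] [z w]; apply: pairE; rewrite /bowtie /Dof /= ?Sk1 ?Sk2; modring.
split.
  move=> [x1 u1] [x2 u2] [x3 u3]; apply: pairE; rewrite /bowtie /Dof /=.
  - apply: (lcP (J1 x1 x2 x3)). fin RD RN RZ.
  - apply: (lcP (J2 u1 u2 u3)). fin RD RN RZ.
move=> [x1 u1] [x2 u2] [x3 u3] [x4 u4] [x5 u5]; apply: pairE; rewrite /bowtie /Dof /=; apply: goal0.
- apply: (lcP (F1 x1 x2 x3 x4 x5)).
  apply: (lcN (C1 x1 x2 x3 u4 u5)).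
  apply: (lcP (C1 x1 x2 x4 u3 u5)).
  apply: (lcN (C1 x1 x2 x5 u4 u3)).
  apply: (lcP (C1 x1 x2 x5 u3 u4)).
  apply: (lcN (C2 x3 x4 x1 u2 u5)).
  apply: (lcN (S1 (rho2 u2 u4 x1) x3 x5)).
  apply: (lcP (C3 x1 x3 x5 u2 u4)).
  apply: (lcN (C3 x1 x4 x5 u2 u3)).
  apply: (lcN (R2a u2 u3 u4 u5 x1)).
  apply: (lcP (C2 x3 x4 x2 u1 u5)).
  apply: (lcP (S1 (rho2 u1 u4 x2) x3 x5)).
  apply: (lcN (C3 x2 x3 x5 u1 u4)).
  apply: (lcP (C3 x2 x4 x5 u1 u3)).
  apply: (lcP (R2a u1 u3 u4 u5 x2)).
  apply: (lcP (C1 x3 x4 x5 u2 u1)).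
  apply: (lcN (C1 x3 x4 x5 u1 u2)).
  apply: (lcN (S1 (rho2 u2 u1 x4) x3 x5)).
  apply: (lcP (S1 (rho2 u1 u2 x4) x3 x5)).
  apply: (lcN (C3 x3 x4 x5 u2 u1)).
  apply: (lcP (C3 x3 x4 x5 u1 u2)).
  apply: (lcP (C3 x4 x3 x5 u2 u1)).
  apply: (lcN (C3 x4 x3 x5 u1 u2)).
  apply: (lcN (R2b u1 u2 u4 u5 x3)).
  apply: (lcP (R2b u1 u2 u3 u5 x4)).
  apply: (lcP (R2b u1 u2 u3 u4 x5)).
  apply: (lcN (R2b u1 u2 u4 u3 x5)).
  fin RD RN RZ.
- apply: (lcP (R1b x1 x2 x3 x4 u5)).
  apply: (lcN (R1b x1 x2 x4 x3 u5)).
  apply: (lcP (R1b x1 x2 x3 x5 u4)).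
  apply: (lcN (R1b x1 x2 x4 x5 u3)).
  apply: (lcP (C4 x2 x1 u3 u4 u5)).
  apply: (lcN (C4 x1 x2 u3 u4 u5)).
  apply: (lcN (S2 (rho1 x2 x1 u4) u3 u5)).
  apply: (lcP (S2 (rho1 x1 x2 u4) u3 u5)).
  apply: (lcN (C6 x2 x1 u3 u4 u5)).
  apply: (lcP (C6 x1 x2 u3 u4 u5)).
  apply: (lcP (C6 x2 x1 u4 u3 u5)).
  apply: (lcN (C6 x1 x2 u4 u3 u5)).
  apply: (lcP (R1a x1 x3 x4 x5 u2)).
  apply: (lcP (C6 x1 x3 u2 u4 u5)).
  apply: (lcP (S2 (rho1 x1 x4 u2) u3 u5)).
  apply: (lcN (C6 x1 x4 u2 u3 u5)).
  apply: (lcP (C5 x1 x5 u3 u4 u2)).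
  apply: (lcN (R1a x2 x3 x4 x5 u1)).
  apply: (lcN (C6 x2 x3 u1 u4 u5)).
  apply: (lcN (S2 (rho1 x2 x4 u1) u3 u5)).
  apply: (lcP (C6 x2 x4 u1 u3 u5)).
  apply: (lcN (C5 x2 x5 u3 u4 u1)).
  apply: (lcN (C4 x4 x3 u1 u2 u5)).
  apply: (lcP (C4 x3 x4 u1 u2 u5)).
  apply: (lcP (C4 x3 x5 u1 u2 u4)).
  apply: (lcN (C4 x4 x5 u1 u2 u3)).
  apply: (lcP (F2 u1 u2 u3 u4 u5)).
  fin RD RN RZ.
Qed.

Lemma core2 (K : fieldType) (V1 V2 : lmodType K) (br1 : V1 -> V1 -> V1 -> V1) (br2 : V2 -> V2 -> V2 -> V2)
    (rho1 : V1 -> V1 -> V2 -> V2) (rho2 : V2 -> V2 -> V1 -> V1) :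
  lin3 br1 -> lin3 br2 -> lin3 rho1 -> lin3 rho2 ->
  lts (bowtie br1 br2 rho1 rho2) -> matched_pair br1 br2 rho1 rho2.
Proof.
move=> L1 L2 L3 L4 [_ [Sk [Jb FI]]].
have RD := (l3D1 L1, l3D2 L1, l3D3 L1, l3D1 L2, l3D2 L2, l3D3 L2, l3D1 L3, l3D2 L3, l3D3 L3, l3D1 L4, l3D2 L4, l3D3 L4).
have RN := (l3N1 L1, l3N2 L1, l3N3 L1, l3N1 L2, l3N2 L2, l3N3 L2, l3N1 L3, l3N2 L3, l3N3 L3, l3N1 L4, l3N2 L4, l3N3 L4).
have RZ := (l301 L1, l302 L1, l303 L1, l301 L2, l302 L2, l303 L2, l301 L3, l302 L3, l303 L3, l301 L4, l302 L4, l303 L4).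
have [L1a [L1b L1c]] := L1. have [L2a [L2b L2c]] := L2.
have [L3a [L3b L3c]] := L3. have [L4a [L4b L4c]] := L4.
split.
  split; first exact: L1. split.
    move=> x y; apply: goal0. apply: (lcP (congr1 fst (Sk (x, 0) (y, 0)))). fin RD RN RZ.
  split.
    move=> x y z; apply: goal0. apply: (lcP (congr1 fst (Jb (x, 0) (y, 0) (z, 0)))). fin RD RN RZ.
  move=> x1 x2 x3 x4 x5; apply: goal0. apply: (lcP (congr1 fst (FI (x1, 0) (x2, 0) (x3, 0) (x4, 0) (x5, 0)))). fin RD RN RZ.
split.
  split; first exact: L2. split.
    move=> x y; apply: goal0. apply: (lcP (congr1 snd (Sk (0, x) (0, y)))). fin RD RN RZ.
  split.
    move=> x y z; apply: goal0. apply: (lcP (congr1 snd (Jb (0, x) (0, y) (0, z)))). fin RD RN RZ.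
  move=> u1 u2 u3 u4 u5; apply: goal0. apply: (lcP (congr1 snd (FI (0, u1) (0, u2) (0, u3) (0, u4) (0, u5)))). fin RD RN RZ.
split.
  do 3 (split; first by []). split.
  move=> x1 x2 x3 x4 u1; apply: goal0. apply: (lcP (congr1 snd (FI (x1, 0) (0, u1) (x2, 0) (x3, 0) (x4, 0)))). fin RD RN RZ.
  move=> x1 x2 x3 x4 u1; apply: goal0. apply: (lcP (congr1 snd (FI (x1, 0) (x2, 0) (x3, 0) (0, u1) (x4, 0)))). fin RD RN RZ.
split.
  do 3 (split; first by []). split.
  move=> u1 u2 u3 u4 x1; apply: goal0. apply: (lcP (congr1 fst (FI (0, u1) (x1, 0) (0, u2) (0, u3) (0, u4)))). fin RD RN RZ.
  move=> u1 u2 u3 u4 x1; apply: goal0. apply: (lcP (congr1 fst (FI (0, u1) (0, u2) (0, u3) (x1, 0) (0, u4)))). fin RD RN RZ.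
split. move=> x1 x2 x3 u1 u2; apply: goal0. apply: (lcN (congr1 fst (FI (x1, 0) (x2, 0) (x3, 0) (0, u1) (0, u2)))). fin RD RN RZ.
split. move=> x1 x2 x3 u1 u2; apply: goal0. apply: (lcN (congr1 fst (FI (x3, 0) (0, u1) (x1, 0) (x2, 0) (0, u2)))). fin RD RN RZ.
split. move=> x1 x2 x3 u1 u2; apply: goal0. apply: (lcN (congr1 fst (FI (x1, 0) (0, u1) (0, u2) (x2, 0) (x3, 0)))). fin RD RN RZ.
split. move=> x1 x2 u1 u2 u3; apply: goal0. apply: (lcP (congr1 snd (FI (0, u1) (0, u2) (x1, 0) (0, u3) (x2, 0)))). fin RD RN RZ.
split. move=> x1 x2 u1 u2 u3; apply: goal0. apply: (lcP (congr1 snd (FI (x1, 0) (0, u3) (0, u1) (0, u2) (x2, 0)))). fin RD RN RZ.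
move=> x1 x2 u1 u2 u3; apply: goal0. apply: (lcP (congr1 snd (FI (x1, 0) (0, u1) (x2, 0) (0, u2) (0, u3)))). fin RD RN RZ.
Qed.

Section PairLemmas.
Variables (K : fieldType) (V1 V2 : lmodType K).
Implicit Types (p q : Gsp V1 V2).
Lemma fstD p q : (p + q).1 = p.1 + q.1. Proof. by []. Qed.
Lemma sndD p q : (p + q).2 = p.2 + q.2. Proof. by []. Qed.
Lemma fstN p : (- p).1 = - p.1. Proof. by []. Qed.
Lemma sndN p : (- p).2 = - p.2. Proof. by []. Qed.
Lemma fstZ (a : K) p : (a *: p).1 = a *: p.1. Proof. by []. Qed.
Lemma sndZ (a : K) p : (a *: p).2 = a *: p.2. Proof. by []. Qed.
Lemma fst0 : (0 : Gsp V1 V2).1 = 0. Proof. by []. Qed.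
Lemma snd0 : (0 : Gsp V1 V2).2 = 0. Proof. by []. Qed.
Lemma pl (a : K) (x x' : V1) : ((a *: x + x', 0) : Gsp V1 V2) = a *: (x, 0) + (x', 0).
Proof. by apply: pairE; rewrite /= ?scaler0 ?addr0. Qed.
Lemma pr (a : K) (u u' : V2) : ((0, a *: u + u') : Gsp V1 V2) = a *: (0, u) + (0, u').
Proof. by apply: pairE; rewrite /= ?scaler0 ?addr0. Qed.
Lemma psplit (x : V1) (u : V2) : ((x, u) : Gsp V1 V2) = (x, 0) + (0, u).
Proof. by apply: pairE; rewrite /= ?addr0 ?add0r. Qed.
End PairLemmas.

Lemma mp_lin (K : fieldType) (V1 V2 : lmodType K) (br1 : V1 -> V1 -> V1 -> V1) (br2 : V2 -> V2 -> V2 -> V2)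
    (rho1 : V1 -> V1 -> V2 -> V2) (rho2 : V2 -> V2 -> V1 -> V1) :
  matched_pair br1 br2 rho1 rho2 -> lin3 br1 /\ lin3 br2 /\ lin3 rho1 /\ lin3 rho2.
Proof.
move=> [[L1 _] [[L2 _] [[L3a [L3b [L3c _]]] [[L4a [L4b [L4c _]]] _]]]].
by split; [|split; [|split; split; [|split| |split]]].
Qed.

Lemma twilled_eq (K : fieldType) (V1 V2 : lmodType K) (brG : Gsp V1 V2 -> Gsp V1 V2 -> Gsp V1 V2 -> Gsp V1 V2) :
  strict_twilled brG -> forall a b c,
  bowtie (res1 brG) (res2 brG) (rho1_of brG) (rho2_of brG) a b c = brG a b c.
Proof.
move=> [[LG [SkG [JG FG]]] [c1 [c2 [c3 [c4 [c5 [c6 [c7 c8]]]]]]]] [x u] [y v] [z w].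
have LG' : lin3 brG := LG. have SG := skewP LG SkG.
have -> : brG (x, u) (y, v) (z, w) = brG ((x,0) + (0,u)) ((y,0) + (0,v)) ((z,0) + (0,w)) by rewrite -!psplit.
rewrite !(l3D1 LG') !(l3D2 LG') !(l3D3 LG').
apply: pairE; rewrite /bowtie /res1 /res2 /rho1_of /rho2_of /Dof /= ?fstD ?sndD ?c1 ?c2 ?c3 ?c4 ?c5 ?c6 ?c7 ?c8; apply: goal0.
- apply: (lcN (congr1 fst (JG (0, u) (0, v) (z, 0)))).
  apply: (lcP (congr1 fst (SG (0, v) (z, 0) (0, u)))).
  apply: (lcN (congr1 fst (SG (y, 0) (0, u) (0, w)))).
  rewrite ?fstD ?fst0 ?c1 ?c2 ?c3 ?c4 ?c5 ?c6 ?c7 ?c8; modring.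
- apply: (lcN (congr1 snd (JG (x, 0) (y, 0) (0, w)))).
  apply: (lcP (congr1 snd (SG (y, 0) (0, w) (x, 0)))).
  apply: (lcN (congr1 snd (SG (x, 0) (0, v) (z, 0)))).
  rewrite ?sndD ?snd0 ?c1 ?c2 ?c3 ?c4 ?c5 ?c6 ?c7 ?c8; modring.
Qed.
Unset Implicit Arguments.

Theorem theorem5p4 (K : fieldType) (V1 V2 : lmodType K)
    (hK : [pchar K] =i pred0) :
  (* matched pair |-> strict twilled LTS via the bowtie bracket *)
  (forall (br1 : V1 -> V1 -> V1 -> V1) (br2 : V2 -> V2 -> V2 -> V2)
          (rho1 : V1 -> V1 -> V2 -> V2) (rho2 : V2 -> V2 -> V1 -> V1),
      matched_pair br1 br2 rho1 rho2 -> strict_twilled (bowtie br1 br2 rho1 rho2)) /\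
  (* strict twilled LTS |-> matched pair via restriction *)
  (forall brG : Gsp V1 V2 -> Gsp V1 V2 -> Gsp V1 V2 -> Gsp V1 V2,
      strict_twilled brG ->
      matched_pair (res1 brG) (res2 brG) (rho1_of brG) (rho2_of brG)) /\
  (* the two constructions are mutually inverse *)
  (forall (br1 : V1 -> V1 -> V1 -> V1) (br2 : V2 -> V2 -> V2 -> V2)
          (rho1 : V1 -> V1 -> V2 -> V2) (rho2 : V2 -> V2 -> V1 -> V1),
      matched_pair br1 br2 rho1 rho2 ->
      (forall x y z, res1 (bowtie br1 br2 rho1 rho2) x y z = br1 x y z) /\
      (forall u v w, res2 (bowtie br1 br2 rho1 rho2) u v w = br2 u v w) /\
      (forall x y u, rho1_of (bowtie br1 br2 rho1 rho2) x y u = rho1 x y u) /\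
      (forall u v x, rho2_of (bowtie br1 br2 rho1 rho2) u v x = rho2 u v x)) /\
  (forall brG : Gsp V1 V2 -> Gsp V1 V2 -> Gsp V1 V2 -> Gsp V1 V2,
      strict_twilled brG ->
      forall a b c,
        bowtie (res1 brG) (res2 brG) (rho1_of brG) (rho2_of brG) a b c = brG a b c).
Proof.
split.
  move=> br1 br2 rho1 rho2 MP.
  have [L1 [L2 [L3 L4]]] := mp_lin MP.
  have RZ := (l301 L1, l302 L1, l303 L1, l301 L2, l302 L2, l303 L2, l301 L3, l302 L3, l303 L3, l301 L4, l302 L4, l303 L4).
  split; first exact: core1.
  do 7 (split; first by move=> *; rewrite /bowtie /Dof /= ?RZ; modring).
  by move=> *; rewrite /bowtie /Dof /= ?RZ; modring.
split.
  move=> brG ST.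
  have [[[LGa [LGb LGc]] _] _] := ST.
  have EQ : bowtie (res1 brG) (res2 brG) (rho1_of brG) (rho2_of brG) = brG.
    apply: functional_extensionality => a; apply: functional_extensionality => b.
    apply: functional_extensionality => c; exact: twilled_eq.
  apply: core2; last by rewrite EQ; exact: ST.1.
  - split; [|split].
    + by move=> a x x' y z; rewrite /res1 pl LGa.
    + by move=> a x y y' z; rewrite /res1 pl LGb.
    + by move=> a x y z z'; rewrite /res1 pl LGc.
  - split; [|split].
    + by move=> a x x' y z; rewrite /res2 pr LGa.
    + by move=> a x y y' z; rewrite /res2 pr LGb.
    + by move=> a x y z z'; rewrite /res2 pr LGc.
  - split; [|split].
    + by move=> a x x' y z; rewrite /rho1_of pl LGb.
    + by move=> a x y y' z; rewrite /rho1_of pl LGc.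
    + by move=> a x y z z'; rewrite /rho1_of pr LGa.
  - split; [|split].
    + by move=> a x x' y z; rewrite /rho2_of pr LGb.
    + by move=> a x y y' z; rewrite /rho2_of pr LGc.
    + by move=> a x y z z'; rewrite /rho2_of pl LGa.
split.
  move=> br1 br2 rho1 rho2 MP.
  have [L1 [L2 [L3 L4]]] := mp_lin MP.
  have RZ := (l301 L1, l302 L1, l303 L1, l301 L2, l302 L2, l303 L2, l301 L3, l302 L3, l303 L3, l301 L4, l302 L4, l303 L4).
  by split; [|split; [|split]] => *; rewrite /res1 /res2 /rho1_of /rho2_of /bowtie /Dof /= ?RZ; modring.
exact: twilled_eq.
Qed.
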